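(* For each regular cardinal $\kappa$, a complete bounded distributive lattice $A$ is $\kappa$-proHeyting if and only if it is a $\kappa$-frame; that is, $\mathbf{C}\kappa\mathbf{proH}=\mathbf{C}\kappa\mathbf{Frm}$.
   Context: For a meet-semilattice $A$: $\mathcal{DM} A$ is the complete lattice of normal ideals; an existing join $\bigvee S$ is distributive if $a\wedge\bigvee S=\bigvee\{a\wedge s:s\in S\}$ for all $a$; $\mathcal{BL} A$ is the frame of D-ideals (downsets containing $\bigvee S$ for every subset $S$ of them with distributive join), and $\mathcal{DM} A\subseteq\mathcal{BL} A$. $\mathcal{BL}_\kappa(\mathcal{DM} A)$ is the sub-$\kappa$-frame of $\mathcal{BL} A$ generated by $\mathcal{DM} A$ (closure under finite meets and joins of fewer than $\kappa$ elements in $\mathcal{BL} A$). $A$ is $\kappa$-proHeyting if $\mathcal{BL}_\kappa(\mathcal{DM} A)=\mathcal{DM} A$; $A$ is a $\kappa$-frame if all joins of fewer than $\kappa$ elements exist and are distributive. $\mathbf{C}\kappa\mathbf{proH}$ and $\mathbf{C}\kappa\mathbf{Frm}$ denote the classes of complete bounded distributive lattices that are $\kappa$-proHeyting, respectively $\kappa$-frames. *)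

(* Defs.v *)
From HB Require Import structures.
From mathcomp Require Import all_boot all_order.
Set Implicit Arguments. Unset Strict Implicit. Unset Printing Implicit Defensive.
Import Order.TTheory.
Local Open Scope order_scope.

(* ---------- Cardinals: a cardinal kappa is represented by a type K of size kappa ---------- *)
Definition card_le (X Y : Type) : Prop := exists f : X -> Y, injective f.
Definition card_lt (X Y : Type) : Prop := card_le X Y /\ ~ card_le Y X.

Definition regular_cardinal (K : Type) : Prop :=
  card_le nat K /\
  forall (I : Type) (F : I -> Type),
    card_lt I K -> (forall i, card_lt (F i) K) -> card_lt {i : I & F i} K.

Definition fewer_than (K : Type) (T : Type) (S : T -> Prop) : Prop :=
  card_lt {x : T | S x} K.

Section MeetSemilattice.
Context {d : Order.disp_t} {A : meetSemilatticeType d}.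

Definition upper_bounds (S : A -> Prop) : A -> Prop :=
  fun u => forall s, S s -> s <= u.
Definition lower_bounds (S : A -> Prop) : A -> Prop :=
  fun l => forall s, S s -> l <= s.

Definition is_join (S : A -> Prop) (j : A) : Prop :=
  upper_bounds S j /\ forall u, upper_bounds S u -> j <= u.

Definition distributive_join (S : A -> Prop) (j : A) : Prop :=
  is_join S j /\
  forall a : A, is_join (fun y => exists2 s, S s & y = a `&` s) (a `&` j).

Definition downset (I : A -> Prop) : Prop :=
  forall x y, x <= y -> I y -> I x.

(* normal ideals: I = (I^u)^l ; DM A is the family of these *)
Definition normal_ideal (I : A -> Prop) : Prop :=
  forall x, I x <-> lower_bounds (upper_bounds I) x.

Definition D_ideal (I : A -> Prop) : Prop :=
  downset I /\
  forall (S : A -> Prop) (j : A), (forall s, S s -> I s) -> distributive_join S j -> I j.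

(* join in the frame BL A of a family G of D-ideals: the least D-ideal containing all *)
Definition BL_join (G : (A -> Prop) -> Prop) : A -> Prop :=
  fun x => forall J, D_ideal J -> (forall X, G X -> forall y, X y -> J y) -> J x.

Definition kappa_subframe_closed (K : Type) (F : (A -> Prop) -> Prop) : Prop :=
  F (fun _ => True) /\
  (forall X Y, F X -> F Y -> F (fun x => X x /\ Y x)) /\
  (forall G : (A -> Prop) -> Prop,
      (forall X, G X -> F X) -> fewer_than K G -> F (BL_join G)).

Definition BL_kappa_DM (K : Type) : (A -> Prop) -> Prop :=
  fun X => forall F, kappa_subframe_closed K F ->
                     (forall Y, normal_ideal Y -> F Y) -> F X.

Definition kappa_proHeyting (K : Type) : Prop :=
  forall X : A -> Prop, BL_kappa_DM K X <-> normal_ideal X.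

Definition kappa_frame (K : Type) : Prop :=
  forall S : A -> Prop, fewer_than K S -> exists j, distributive_join S j.

Definition complete_lattice : Prop :=
  forall S : A -> Prop, exists j, is_join S j.

End MeetSemilattice.

(* Main.v *)
Require Import Defs.
From HB Require Import structures.
From mathcomp Require Import all_boot all_order.
From Stdlib Require Import ProofIrrelevance ClassicalEpsilon.

Set Implicit Arguments. Unset Strict Implicit. Unset Printing Implicit Defensive.
Import Order.TTheory.
Local Open Scope order_scope.

Lemma card_le_lt (X Y K : Type) : card_le X Y -> card_lt Y K -> card_lt X K.
Proof.
move=> [f hf] [[g hg] hn]; split.
  by exists (fun x => g (f x)) => x y /hg /hf.
move=> [h hh]; apply: hn; exists (fun k => f (h k)) => x y /hf /hh //.
Qed.

Section S.
Context {d : Order.disp_t} {A : tbDistrLatticeType d}.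

Definition down (s : A) : A -> Prop := fun x => x <= s.

Lemma normal_principal (X : A -> Prop) (b : A) :
  (forall x, X x <-> x <= b) -> normal_ideal X.
Proof.
move=> H x; split.
  move=> Xx u hu; apply: le_trans (hu _ (proj2 (H b) (lexx b))).
  exact: (proj1 (H x) Xx).
move=> hx; apply/H; apply: hx => s /H //.
Qed.

Lemma normal_join (X : A -> Prop) (b : A) :
  normal_ideal X -> is_join X b -> forall x, X x <-> x <= b.
Proof.
move=> hN [hub hl] x; split; first exact: hub.
move=> xb; apply/hN => u hu; exact: le_trans xb (hl u hu).
Qed.

Lemma D_ideal_down (j : A) : D_ideal (down j).
Proof.
split; first by move=> x y xy yj; exact: le_trans xy yj.
by move=> S t hS [[_ hl] _]; apply: hl.
Qed.

End S.

Theorem proposition4p12 (K : Type) (hK : regular_cardinal K)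
  (d : Order.disp_t) (A : tbDistrLatticeType d)
  (hA : @complete_lattice d A) :
  @kappa_proHeyting d A K <-> @kappa_frame d A K.
Proof.
split.
- move=> HN S hS.
  pose G := fun X : A -> Prop => exists2 s, S s & X = down s.
  have hG : fewer_than K G.
    apply: card_le_lt hS.
    have ch : forall X : {X | G X}, {s | S s /\ sval X = down s}.
      move=> [X hX]; apply: constructive_indefinite_description.
      case: hX => s hs e; exists s; by split.
    exists (fun X => exist _ (sval (ch X)) (proj1 (proj2_sig (ch X)))).
    move=> X Y [] e.
    have := proj2 (proj2_sig (ch X)); have := proj2 (proj2_sig (ch Y)).
    rewrite e => e1 e2.
    destruct X as [X pX]; destruct Y as [Y pY]; simpl in *.
    have eXY : X = Y by rewrite e1 e2.
    subst Y; by rewrite (proof_irrelevance _ pX pY).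
  pose B := BL_join G.
  have hB : BL_kappa_DM K B.
    move=> F [_ [_ HF]] HNF; apply: HF => //.
    move=> X [s _ ->]; apply: HNF; apply: (@normal_principal _ _ _ s) => //.
  have [b Hb] : exists b, forall x, B x <-> x <= b.
    have nB := proj1 (HN B) hB.
    have [b hb] := hA B; exists b; exact: normal_join.
  have BJ : forall J, D_ideal J -> (forall s, S s -> J s) -> forall x, B x -> J x.
    move=> J DJ HJ x Bx; apply: Bx => // X [s Ss ->] y ys.
    exact: (proj1 DJ) ys (HJ s Ss).
  have SB : forall s, S s -> B s.
    move=> s Ss J DJ HJ; apply: (HJ (down s)); first by exists s.
    exact: lexx.
  have Bb : B b by apply/Hb.
  exists b; split.
    split; first by move=> s /SB /Hb.
    move=> u hu; apply: (BJ (down u)) Bb; first exact: D_ideal_down.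
    exact: hu.
  move=> a; split.
    move=> y [s Ss ->]; apply: leI2 => //; apply/Hb; exact: SB.
  move=> u hu.
  pose J := fun x => a `&` x <= u.
  have DJ : D_ideal J.
    split.
      move=> x y xy; rewrite /J => h; apply: le_trans h.
      exact: leI2.
    move=> T t hT [_ hd]; have [_ hl] := hd a; apply: hl.
    by move=> y [s Ts ->]; apply: hT.
  apply: (BJ J DJ) Bb => s Ss; apply: hu; by exists s.
- move=> HF X; split; last first.
    by move=> nX F _ HNF; apply: HNF.
  move=> HB; apply: HB; last by [].
  split.
    move=> x; split; first by move=> _ u hu; apply: hu.
    by [].
  split.
    move=> X1 Y1 n1 n2.
    have [a ha] := hA X1; have [b hb] := hA Y1.
    apply: (@normal_principal _ _ _ (a `&` b)) => x.
    rewrite lexI; split.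
      by move=> [/(normal_join n1 ha) -> /(normal_join n2 hb) ->].
    by move/andP=> [/(normal_join n1 ha) h1 /(normal_join n2 hb) h2].
  move=> G hGn hG.
  pose S := fun a : A => exists2 X, G X & is_join X a.
  have hS : fewer_than K S.
    apply: card_le_lt hG.
    have ch : forall a : {a | S a}, {X | G X /\ is_join X (sval a)}.
      move=> [a ha]; apply: constructive_indefinite_description.
      case: ha => Y gY jY; exists Y; by split.
    exists (fun a => exist _ (sval (ch a)) (proj1 (proj2_sig (ch a)))).
    move=> a1 a2 [] e.
    have := proj2 (proj2_sig (ch a1)); have := proj2 (proj2_sig (ch a2)).
    rewrite e => [[u2 l2] [u1 l1]].
    destruct a1 as [a1 p1]; destruct a2 as [a2 p2]; simpl in *.
    have e12 : a1 = a2 by apply: le_anti; rewrite (l1 _ u2) (l2 _ u1).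
    subst a2; by rewrite (proof_irrelevance _ p1 p2).
  have [j [[hub hl] hd]] := HF S hS.
  apply: (@normal_principal _ _ _ j) => x; split.
    move=> Bx; apply: (Bx (down j)); first exact: D_ideal_down.
    move=> Y gY y Yy; have [a ha] := hA Y.
    have Sa : S a by exists Y.
    exact: le_trans (proj1 ha y Yy) (hub a Sa).
  move=> xj J DJ HJ; apply: (proj1 DJ) xj _.
  refine (proj2 DJ S j _ (conj (conj hub hl) hd)).
  move=> s [Y gY js]; apply: (HJ Y gY).
  by apply/(normal_join (hGn Y gY) js).
Qed.
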